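(* Let $N\ge2$, let $\mathbf{A}=[1\ 1\ \cdots\ 1]\in\mathbb{R}^{1\times N}$, let $1\le r<N$, let $i_1,\dots,i_r$ be distinct indices in $\{1,\dots,N\}$, and let $\mathbf{B}=[\vec e_{i_1},\dots,\vec e_{i_r}]^{\mathsf T}\in\mathbb{R}^{r\times N}$, where $\vec e_i$ are the standard basis vectors of $\mathbb{R}^N$. Then the principal angles $\theta_1\le\cdots\le\theta_{N-r}$ between the subspaces $\mathcal N(\mathbf{A})$ and $\mathcal N(\mathbf{B})$ satisfy $$\cos\theta_1=\cdots=\cos\theta_{N-r-1}=1\quad\text{and}\quad \cos\theta_{N-r}=\sqrt{\tfrac{r}{N}}.$$
   Context: $\mathcal N(\cdot)$ denotes the null space. For subspaces $\mathcal U,\mathcal V\subseteq\mathbb{R}^N$ with $\dim\mathcal U=p\le\dim\mathcal V$ (here $\mathcal U=\mathcal N(\mathbf B)$, of dimension $N-r$, and $\mathcal V=\mathcal N(\mathbf A)$, of dimension $N-1$), the principal angles $\theta_k\in[0,\pi/2]$, $k=1,\dots,p$, are defined recursively by $\cos\theta_k=\vec u_k^{\mathsf T}\vec v_k=\max_{\vec u\in\mathcal U}\max_{\vec v\in\mathcal V}\vec u^{\mathsf T}\vec v$ subject to $\|\vec u\|_2=\|\vec v\|_2=1$, $\vec u_j^{\mathsf T}\vec u=0$, $\vec v_j^{\mathsf T}\vec v=0$ for $j=1,\dots,k-1$. *)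

(* Defs.v *)
From HB Require Import structures.
From mathcomp Require Import all_boot all_order all_algebra.
From mathcomp Require Import reals.
Set Implicit Arguments. Unset Strict Implicit. Unset Printing Implicit Defensive.
Import Order.TTheory GRing.Theory Num.Theory.
Local Open Scope ring_scope.

Definition dotv (R : realType) (N : nat) (x y : 'cV[R]_N) : R :=
  \sum_(i < N) x i 0 * y i 0.

Definition in_null (R : realType) (m N : nat) (M : 'M[R]_(m, N)) (x : 'cV[R]_N) : Prop :=
  M *m x = 0.

Definition onesA (R : realType) (N : nat) : 'M[R]_(1, N) := const_mx 1.

Definition selB (R : realType) (N r : nat) (i : 'I_r -> 'I_N) : 'M[R]_(r, N) :=
  \matrix_(k < r, j < N) (j == i k)%:R.

(* (u_k, v_k)_{k < p} are principal vector pairs for U = N(MU), V = N(MV),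
   following the recursive definition: for each k, u_k, v_k are unit vectors
   in U, V resp., orthogonal to the previous u_j, v_j (j < k), and maximize
   u^T v among all such admissible pairs.  cos theta_k = u_k^T v_k. *)
Definition principal_pairs (R : realType) (m n N p : nat)
    (MU : 'M[R]_(m, N)) (MV : 'M[R]_(n, N)) (u v : 'I_p -> 'cV[R]_N) : Prop :=
  forall k : 'I_p,
    [/\ in_null MU (u k) /\ in_null MV (v k),
        dotv (u k) (u k) = 1, dotv (v k) (v k) = 1,
        (forall j : 'I_p, (j < k)%N -> dotv (u j) (u k) = 0 /\ dotv (v j) (v k) = 0)
      & (forall x y : 'cV[R]_N, in_null MU x -> in_null MV y ->
           dotv x x = 1 -> dotv y y = 1 ->
           (forall j : 'I_p, (j < k)%N -> dotv (u j) x = 0 /\ dotv (v j) y = 0) ->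
           dotv x y <= dotv (u k) (v k))].

(* Main.v *)
Require Import Defs.
From HB Require Import structures.
From mathcomp Require Import all_boot all_order all_algebra.
From mathcomp Require Import reals ring lra zify.
Import Order.TTheory GRing.Theory Num.Theory.
Set Implicit Arguments. Unset Strict Implicit. Unset Printing Implicit Defensive.
Local Open Scope ring_scope.

Lemma dotvC (R : realType) N (x y : 'cV[R]_N) : dotv x y = dotv y x.
Proof. by apply: eq_bigr => t _; rewrite mulrC. Qed.

Lemma dotvDl (R : realType) N (x y z : 'cV[R]_N) : dotv (x + y) z = dotv x z + dotv y z.
Proof. by rewrite /dotv -big_split; apply: eq_bigr => t _; rewrite mxE mulrDl. Qed.

Lemma dotvZl (R : realType) N a (x z : 'cV[R]_N) : dotv (a *: x) z = a * dotv x z.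
Proof. by rewrite /dotv mulr_sumr; apply: eq_bigr => t _; rewrite mxE mulrA. Qed.

Lemma dotvNl (R : realType) N (x z : 'cV[R]_N) : dotv (- x) z = - dotv x z.
Proof. by rewrite -scaleN1r dotvZl mulN1r. Qed.

Lemma dotvBl (R : realType) N (x y z : 'cV[R]_N) : dotv (x - y) z = dotv x z - dotv y z.
Proof. by rewrite dotvDl dotvNl. Qed.

Lemma dotvDr (R : realType) N (x y z : 'cV[R]_N) : dotv z (x + y) = dotv z x + dotv z y.
Proof. by rewrite dotvC dotvDl !(dotvC z). Qed.
Lemma dotvZr (R : realType) N a (x z : 'cV[R]_N) : dotv z (a *: x) = a * dotv z x.
Proof. by rewrite dotvC dotvZl dotvC. Qed.
Lemma dotvBr (R : realType) N (x y z : 'cV[R]_N) : dotv z (x - y) = dotv z x - dotv z y.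
Proof. by rewrite dotvC dotvBl !(dotvC z). Qed.
Lemma dotvNr (R : realType) N (x z : 'cV[R]_N) : dotv z (- x) = - dotv z x.
Proof. by rewrite dotvC dotvNl dotvC. Qed.
Lemma dotv0r (R : realType) N (z : 'cV[R]_N) : dotv z 0 = 0.
Proof. by rewrite /dotv big1 // => t _; rewrite mxE mulr0. Qed.

Lemma dotv_ge0 (R : realType) N (x : 'cV[R]_N) : 0 <= dotv x x.
Proof. by apply: sumr_ge0 => t _; rewrite -expr2 sqr_ge0. Qed.

Lemma dotv_eq0 (R : realType) N (x : 'cV[R]_N) : dotv x x = 0 -> x = 0.
Proof.
move=> H; apply/matrixP => t j; rewrite ord1 mxE.
have := @psumr_eq0P R _ predT (fun t => x t 0 ^+ 2) (fun t _ => sqr_ge0 _).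
rewrite /dotv in H; under [X in X = 0 -> _]eq_bigr do rewrite expr2.
by move=> /(_ H t isT) /eqP; rewrite sqrf_eq0 => /eqP.
Qed.

Lemma cs_le1 (R : realType) N (x y : 'cV[R]_N) : dotv x x = 1 -> dotv y y = 1 ->
  `|dotv x y| <= 1.
Proof.
move=> hx hy; have h1 := dotv_ge0 (x - y); have h2 := dotv_ge0 (x + y).
rewrite !(dotvBl, dotvBr, dotvDl, dotvDr) hx hy (dotvC y x) in h1 h2.
rewrite ler_norml; apply/andP; split; lra.
Qed.

Lemma cs_eq1 (R : realType) N (x y : 'cV[R]_N) : dotv x x = 1 -> dotv y y = 1 ->
  dotv x y = 1 -> x = y.
Proof.
move=> hx hy hxy; apply/eqP; rewrite -subr_eq0; apply/eqP/dotv_eq0.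
rewrite !(dotvBl, dotvBr) hx hy (dotvC y x) hxy; lra.
Qed.

Lemma normalize (R : realType) N (x : 'cV[R]_N) : x != 0 ->
  dotv ((Num.sqrt (dotv x x))^-1 *: x) ((Num.sqrt (dotv x x))^-1 *: x) = 1.
Proof.
move=> hx; rewrite dotvZl dotvZr mulrA -expr2 exprVn sqr_sqrtr ?dotv_ge0 // mulVf //.
by apply/eqP => /dotv_eq0 /eqP; rewrite (negbTE hx).
Qed.

Definition mkF (R : realType) N (n : nat) (g : nat -> 'cV[R]_N) : 'M[R]_(n, N) :=
  \matrix_(j < n, t < N) g j t 0.

Lemma mkF_mul (R : realType) N n (g : nat -> 'cV[R]_N) (x : 'cV[R]_N) (j : 'I_n) :
  (mkF n g *m x) j 0 = dotv (g j) x.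
Proof. by rewrite mxE; apply: eq_bigr => t _; rewrite mxE. Qed.

Lemma mkF_null (R : realType) N n (g : nat -> 'cV[R]_N) (x : 'cV[R]_N) :
  mkF n g *m x = 0 <-> forall j, (j < n)%N -> dotv (g j) x = 0.
Proof.
split.
  by move=> H j hj; rewrite -(mkF_mul g x (Ordinal hj)) H mxE.
by move=> H; apply/matrixP => j k; rewrite ord1 mkF_mul H // mxE.
Qed.

Lemma mkF_tr (R : realType) N n m (g h : nat -> 'cV[R]_N) a b :
  (mkF n g *m (mkF m h)^T) a b = dotv (g a) (h b).
Proof. by rewrite mxE; apply: eq_bigr => t _; rewrite !mxE. Qed.

Lemma orth_rank (R : realType) m N (Q : 'M[R]_(m,N)) : Q *m Q^T = 1%:M -> (m <= N)%N.
Proof.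
move=> H; have := mxrankM_maxl Q Q^T; rewrite H mxrank1 => /leq_trans; apply.
exact: rank_leq_col.
Qed.

Lemma exists_orth (R : realType) m N (C : 'M[R]_(m,N)) : (m < N)%N ->
  exists x : 'cV[R]_N, C *m x = 0 /\ dotv x x = 1.
Proof.
move=> hm; set K := kermx C^T.
have hK : K != 0.
  rewrite -mxrank_eq0 mxrank_ker; have := rank_leq_col C^T.
  by rewrite -lt0n subn_gt0 => /leq_ltn_trans; apply.
have [a ha] : exists a, row a K != 0.
  apply/existsP; apply: contraR hK => /existsPn H; apply/eqP/row_matrixP => a.
  by rewrite row0; apply/eqP; move: (H a); rewrite negbK.
set y := (row a K)^T.
have hy : C *m y = 0.
  by rewrite /y -[C]trmxK -trmx_mul -row_mul mulmx_ker row0 trmx0.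
have y0 : y != 0 by apply: contra ha => /eqP h; rewrite -[row a K]trmxK -/y h trmx0.
exists ((Num.sqrt (dotv y y))^-1 *: y); split; last exact: normalize.
by rewrite -scalemxAr hy scaler0.
Qed.


Definition wv (R : realType) N r (i : 'I_r -> 'I_N) : 'cV[R]_N :=
  \col_(t < N) ((t \notin codom i)%:R : R).
Definition onesv (R : realType) N : 'cV[R]_N := const_mx 1.

Lemma selB_mulE (R : realType) N r (i : 'I_r -> 'I_N) k (M : 'M[R]_(N,k)) m b :
  (selB R i *m M) m b = M (i m) b.
Proof.
rewrite mxE (bigD1 (i m)) //= mxE eqxx mul1r big1 ?addr0 // => t /negbTE.
by rewrite mxE => ->; rewrite mul0r.
Qed.

Lemma inU_iff (R : realType) N r (i : 'I_r -> 'I_N) (x : 'cV[R]_N) :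
  in_null (selB R i) x <-> forall m, x (i m) 0 = 0.
Proof.
split => [H m|H]; first by rewrite -selB_mulE H mxE.
by apply/matrixP => m b; rewrite ord1 selB_mulE H mxE.
Qed.

Lemma inV_iff (R : realType) N (x : 'cV[R]_N) :
  in_null (onesA R N) x <-> dotv (onesv R N) x = 0.
Proof.
have E : (onesA R N *m x) 0 0 = dotv (onesv R N) x.
  by rewrite mxE; apply: eq_bigr => t _; rewrite !mxE.
split => [H|H]; first by rewrite -E H mxE.
by apply/matrixP => a b; rewrite !ord1 E H mxE.
Qed.

Lemma wU (R : realType) N r (i : 'I_r -> 'I_N) : in_null (selB R i) (wv R i).
Proof. by apply/inU_iff => m; rewrite mxE codom_f. Qed.

Lemma w_dotU (R : realType) N r (i : 'I_r -> 'I_N) (x : 'cV[R]_N) :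
  in_null (selB R i) x -> dotv (wv R i) x = dotv (onesv R N) x.
Proof.
move/inU_iff => H; apply: eq_bigr => t _; rewrite !mxE.
case: (boolP (t \in codom i)) => /= [/codomP [m ->]|_]; last by [].
by rewrite H !mulr0.
Qed.

Lemma card_notcodom N r (i : 'I_r -> 'I_N) : injective i ->
  #|[pred t | t \notin codom i]| = (N - r)%N.
Proof.
move=> hi; have E := cardC (mem (codom i)); rewrite (card_codom hi) !card_ord in E.
have -> : #|[pred t | t \notin codom i]| = #|[predC codom i]| by apply: eq_card.
by move: #|[predC codom i]| E => k E; rewrite -E addKn.
Qed.

Lemma w1 (R : realType) N r (i : 'I_r -> 'I_N) : injective i ->
  dotv (onesv R N) (wv R i) = (N - r)%:R.
Proof.
move=> hi; rewrite -(card_notcodom hi) -sumr_const big_mkcond /=.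
by apply: eq_bigr => t _; rewrite !mxE mul1r inE; case: (t \in codom i).
Qed.

Lemma ww (R : realType) N r (i : 'I_r -> 'I_N) : injective i ->
  dotv (wv R i) (wv R i) = (N - r)%:R.
Proof. by move=> hi; rewrite w_dotU; [exact: w1 | exact: wU]. Qed.

Lemma oo (R : realType) N : dotv (onesv R N) (onesv R N) = N%:R.
Proof.
by rewrite /dotv (eq_bigr (fun _ => 1)) ?sumr_const ?card_ord // => t _; rewrite !mxE mulr1.
Qed.

Lemma selBB (R : realType) N r (i : 'I_r -> 'I_N) : injective i ->
  selB R i *m (selB R i)^T = 1%:M.
Proof.
move=> hi; apply/matrixP => a b; rewrite selB_mulE !mxE (inj_eq hi).
by case: (a == b).
Qed.


Lemma zlemma (R : realType) N r (i : 'I_r -> 'I_N) (hi : injective i)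
  (hrN : (r < N)%N) (g : nat -> 'cV[R]_N)
  (hg : forall j, (j < (N - r).-1)%N -> in_null (selB R i) (g j) /\ in_null (onesA R N) (g j))
  (hgo : forall j l, (j < (N - r).-1)%N -> (l < (N - r).-1)%N -> dotv (g j) (g l) = (j == l)%:R)
  (x : 'cV[R]_N) (hxU : in_null (selB R i) x) (hx1 : dotv x x = 1)
  (hxg : forall j, (j < (N - r).-1)%N -> dotv (g j) x = 0) :
  x = (dotv (wv R i) x / (N - r)%:R) *: wv R i /\
  (dotv (wv R i) x / (N - r)%:R) ^+ 2 * (N - r)%:R = 1.
Proof.
set p := (N - r)%N. have p0 : (0 < p)%N by rewrite subn_gt0.
have P0 : (p%:R : R) != 0 by rewrite pnatr_eq0 -lt0n.
set a := dotv (wv R i) x / p%:R.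
set z := x - a *: wv R i.
have wwp : dotv (wv R i) (wv R i) = p%:R by exact: ww.
have zU : in_null (selB R i) z.
  by rewrite /in_null mulmxBr -scalemxAr hxU wU scaler0 subr0.
have zw : dotv (wv R i) z = 0.
  by rewrite dotvBr dotvZr wwp /a mulfVK // subrr.
have zg : forall j, (j < p.-1)%N -> dotv (g j) z = 0.
  move=> j hj; have [gU gV] := hg j hj.
  by rewrite dotvBr dotvZr hxg // (dotvC (g j)) w_dotU // (proj1 (inV_iff _)) // mulr0 subrr.
have z0 : z = 0.
  apply/eqP; apply/negPn/negP => hz.
  set zh := (Num.sqrt (dotv z z))^-1 *: z.
  set w' := (Num.sqrt p%:R)^-1 *: wv R i.
  set h := fun n => if n == 0%N then w' else if n == p then zh else g n.-1.
  have hU : forall n, (n <= p)%N -> in_null (selB R i) (h n).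
    move=> n hn; rewrite /h; case: ifP => n0.
      by rewrite /in_null -scalemxAr wU scaler0.
    case: ifP => np; first by rewrite /in_null -scalemxAr zU scaler0.
    apply: (proj1 (hg _ _)).
    by rewrite -ltnS prednK ?lt0n ?n0 // prednK // ltn_neqAle np hn.
  have sp : Num.sqrt (p%:R : R) != 0 by rewrite sqrtr_eq0 -ltNge ltr0n.
  have zz : dotv z z != 0 by apply: contra hz => /eqP /dotv_eq0 ->.
  have w'w' : dotv w' w' = 1.
    by rewrite /w' dotvZl dotvZr wwp mulrA -expr2 exprVn sqr_sqrtr ?ler0n // mulVf //.
  have zhzh : dotv zh zh = 1 by apply: normalize.
  have w'zh : dotv w' zh = 0 by rewrite /w' /zh dotvZl dotvZr zw !mulr0.
  have w'g : forall j, (j < p.-1)%N -> dotv w' (g j) = 0.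
    move=> j hj; have [gU gV] := hg j hj.
    by rewrite /w' dotvZl w_dotU // (proj1 (inV_iff _)) // mulr0.
  have zhg : forall j, (j < p.-1)%N -> dotv zh (g j) = 0.
    by move=> j hj; rewrite /zh dotvZl dotvC zg // mulr0.
  have hw : forall n, (n <= p)%N -> dotv w' (h n) = (0 == n)%:R.
    move=> n hn; rewrite /h; case: ifP => [/eqP ->|n0] //.
    rewrite (eq_sym 0%N) n0; case: ifP => np //=.
    apply: w'g; by rewrite -ltnS prednK ?lt0n ?n0 // prednK // ltn_neqAle np hn.
  have hzh : forall n, (n <= p)%N -> dotv zh (h n) = (p == n)%:R.
    move=> n hn; rewrite /h; case: ifP => [/eqP ->|n0].
      by rewrite dotvC w'zh (gtn_eqF p0).
    case: ifP => [/eqP ->|np]; first by rewrite eqxx zhzh.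
    rewrite (eq_sym p) np; apply: zhg.
    by rewrite -ltnS prednK ?lt0n ?n0 // prednK // ltn_neqAle np hn.
  have hgg : forall j, (j < p.-1)%N -> forall n, (n <= p)%N -> dotv (g j) (h n) = (j.+1 == n)%:R.
    move=> j hj n hn; have jp : (j.+1 < p)%N by rewrite -[p]prednK.
    rewrite /h; case: ifP => [/eqP ->|n0]; first by rewrite dotvC w'g.
    case: ifP => [/eqP ->|np]; first by rewrite dotvC zhg // (ltn_eqF jp).
    rewrite hgo //; last by rewrite -ltnS prednK ?lt0n ?n0 // prednK // ltn_neqAle np hn.
    by rewrite -eqSS prednK // lt0n n0.
  have hh : forall a1 b, (a1 <= p)%N -> (b <= p)%N -> dotv (h a1) (h b) = (a1 == b)%:R.
    move=> a1 b ha hb; rewrite {1}/h; case: ifP => [/eqP ->|a0]; first exact: hw.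
    case: ifP => [/eqP ->|ap]; first exact: hzh.
    have a1p : (0 < a1)%N by rewrite lt0n a0.
    have a1q : (a1.-1 < p.-1)%N.
      by rewrite -(ltn_add2r 1) !addn1 !prednK // ltn_neqAle ap ha.
    by rewrite hgg // prednK.
  set Q := col_mx (selB R i) (mkF p.+1 h).
  have : Q *m Q^T = 1%:M.
    rewrite /Q tr_col_mx mul_col_mx !mul_mx_row selBB // scalar_mx_block.
    have E : selB R i *m (mkF p.+1 h)^T = 0.
      apply/matrixP => m b; rewrite selB_mulE !mxE.
      exact: (proj1 (inU_iff _ _) (hU b (ltn_ord b)) m).
    rewrite E -[mkF p.+1 h *m _]trmxK trmx_mul trmxK E trmx0.
    congr block_mx; apply/matrixP => a1 b; rewrite mkF_tr mxE hh //; by rewrite -ltnS.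
  move/orth_rank; rewrite addnS /p subnKC ?ltnn //; exact: ltnW.
have xe : x = a *: wv R i by apply/eqP; rewrite -subr_eq0 -/z z0.
split => //; rewrite -[X in _ = X]hx1 [in RHS]xe dotvZl dotvZr wwp mulrA -expr2 //.
Qed.


Definition cst (R : realType) N r : R := Num.sqrt ((N - r)%:R * r%:R / N%:R).
Definition y0v (R : realType) N r (i : 'I_r -> 'I_N) : 'cV[R]_N :=
  (cst R N r)^-1 *: (wv R i - ((N - r)%:R / N%:R) *: onesv R N).

Lemma numfacts (R : realType) N r : (1 <= r)%N -> (r < N)%N ->
  [/\ (N%:R : R) = r%:R + (N - r)%:R, (r%:R : R) != 0, ((N - r)%:R : R) != 0,
      (N%:R : R) != 0 & cst R N r ^+ 2 = (N - r)%:R * r%:R / N%:R].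
Proof.
move=> hr hrN; split.
- by rewrite -natrD subnKC // ltnW.
- by rewrite pnatr_eq0 -lt0n.
- by rewrite pnatr_eq0 -lt0n subn_gt0.
- by rewrite pnatr_eq0 -lt0n (leq_ltn_trans _ hrN).
- by rewrite sqr_sqrtr // divr_ge0 // mulr_ge0.
Qed.

Lemma cst_gt0 (R : realType) N r : (1 <= r)%N -> (r < N)%N -> 0 < cst R N r.
Proof.
move=> hr hrN; rewrite sqrtr_gt0 divr_gt0 ?mulr_gt0 // ltr0n ?subn_gt0 //.
exact: (leq_ltn_trans _ hrN).
Qed.

Lemma y0_facts (R : realType) N r (i : 'I_r -> 'I_N) : injective i ->
  (1 <= r)%N -> (r < N)%N ->
  [/\ dotv (y0v R i) (y0v R i) = 1, in_null (onesA R N) (y0v R i),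
      dotv (wv R i) (y0v R i) = cst R N r &
      forall f, in_null (selB R i) f -> in_null (onesA R N) f -> dotv f (y0v R i) = 0].
Proof.
move=> hi hr hrN; have [EN r0 p0 N0 c2] := numfacts R hr hrN.
have c0 : cst R N r != 0 by rewrite gt_eqF // cst_gt0.
have ww' := ww R hi; have w1' := w1 R hi; have oo' := oo R N.
have w1'' : dotv (wv R i) (onesv R N) = (N - r)%:R by rewrite dotvC.
set P := ((N - r)%:R : R) in ww' w1' w1'' EN p0 c2 *.
set c := cst R N r in c2 c0 *.
split.
- rewrite /y0v dotvZl dotvZr !(dotvBl, dotvBr, dotvZl, dotvZr) ww' w1' w1'' oo' mulrA -expr2 exprVn.
  rewrite c2 EN; field; rewrite -EN; apply/and3P; split => //.
- apply/inV_iff; rewrite /y0v dotvZr dotvBr dotvZr w1' oo' EN; field.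
  apply/andP; split; [by rewrite -EN | exact: c0].
- rewrite /y0v dotvZr dotvBr dotvZr ww' w1''.
  apply: (mulfI c0); rewrite mulrA divff // mul1r -expr2 c2 EN; field; by rewrite -EN.
- move=> f fU fV; rewrite /y0v dotvZr dotvBr dotvZr (dotvC f) w_dotU // (dotvC f).
  by rewrite (proj1 (inV_iff _) fV) mulr0 subrr mulr0.
Qed.

Lemma abs_ac (R : realType) N r (a : R) : (1 <= r)%N -> (r < N)%N ->
  a ^+ 2 * (N - r)%:R = 1 -> `|a * cst R N r| = Num.sqrt (r%:R / N%:R).
Proof.
move=> hr hrN ha; have [EN r0 p0 N0 c2] := numfacts R hr hrN.
by rewrite -sqrtr_sqr exprMn c2 !mulrA ha mul1r.
Qed.

Lemma upper (R : realType) N r (i : 'I_r -> 'I_N) (a : R) (y : 'cV[R]_N) :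
  injective i -> (1 <= r)%N -> (r < N)%N ->
  a ^+ 2 * (N - r)%:R = 1 -> in_null (onesA R N) y -> dotv y y = 1 ->
  dotv (a *: wv R i) y <= Num.sqrt (r%:R / N%:R).
Proof.
move=> hi hr hrN ha hyV hy1; have [Y1 Y2 Y3 Y4] := y0_facts R hi hr hrN.
have c0 : cst R N r != 0 by rewrite gt_eqF // cst_gt0.
have wy : dotv (wv R i) y = cst R N r * dotv (y0v R i) y.
  rewrite /y0v dotvZl dotvBl dotvZl (proj1 (inV_iff _) hyV) mulr0 subr0 mulrA.
  by rewrite divff // mul1r.
rewrite dotvZl wy mulrA -(abs_ac hr hrN ha).
apply: (le_trans (ler_norm _)); rewrite normrM; apply: ler_piMr => //.
exact: cs_le1.
Qed.

Lemma lower (R : realType) N r (i : 'I_r -> 'I_N) (a : R) :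
  injective i -> (1 <= r)%N -> (r < N)%N ->
  a ^+ 2 * (N - r)%:R = 1 -> exists s : R, s ^+ 2 = 1 /\
  dotv (a *: wv R i) (s *: y0v R i) = Num.sqrt (r%:R / N%:R).
Proof.
move=> hi hr hrN ha; have [Y1 Y2 Y3 Y4] := y0_facts R hi hr hrN.
have cp := cst_gt0 R hr hrN.
rewrite -(abs_ac hr hrN ha).
case: (lerP 0 a) => a0.
  exists 1; split; rewrite ?expr1n // dotvZl dotvZr Y3 mul1r ger0_norm //.
  by rewrite mulr_ge0 // ltW.
exists (-1); split; first by rewrite sqrrN expr1n.
by rewrite dotvZl dotvZr Y3 ltr0_norm ?pmulr_llt0 //; ring.
Qed.


Lemma constr_exists (R : realType) N r (i : 'I_r -> 'I_N) n (g : nat -> 'cV[R]_N) :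
  (r < N)%N -> (n < (N - r).-1)%N ->
  exists x, [/\ in_null (selB R i) x, in_null (onesA R N) x, dotv x x = 1 &
    forall j, (j < n)%N -> dotv (g j) x = 0].
Proof.
move=> hrN hn.
have [|x [Cx x1]] := exists_orth (col_mx (selB R i) (col_mx (onesA R N) (mkF n g))).
  lia.
move/eqP: Cx; rewrite !mul_col_mx !col_mx_eq0 => /and3P [/eqP h1 /eqP h2 /eqP h3].
by exists x; split => //; apply/mkF_null.
Qed.

Lemma leq1 (R : realType) N (x y : 'cV[R]_N) : dotv x x = 1 -> dotv y y = 1 -> dotv x y <= 1.
Proof. by move=> hx hy; apply: le_trans (ler_norm _) (cs_le1 hx hy). Qed.

Lemma uniq_part (R : realType) (N r : nat) (hN : (2 <= N)%N)
    (hr1 : (1 <= r)%N) (hrN : (r < N)%N) (i : 'I_r -> 'I_N) (hi : injective i)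
    (u v : 'I_(N - r) -> 'cV[R]_N) :
  principal_pairs (selB R i) (onesA R N) u v ->
  (forall k : 'I_(N - r), (k < N - r - 1)%N -> dotv (u k) (v k) = 1) /\
  (forall k : 'I_(N - r), (k : nat) = (N - r - 1)%N ->
     dotv (u k) (v k) = Num.sqrt (r%:R / N%:R)).
Proof.
move=> PP.
set g := fun n => oapp u 0 (insub n : option 'I_(N - r)).
have gE : forall k : 'I_(N - r), g k = u k by move=> k; rewrite /g valK.
have step1 : forall n, (n <= (N - r).-1)%N -> forall k : 'I_(N - r), (k < n)%N -> u k = v k.
  elim=> [|n IH] hn k; first by [].
  rewrite ltnS leq_eqVlt => /orP [/eqP kn|kn]; last by apply: IH => //; lia.
  have nlt : (n < (N - r).-1)%N by lia.
  have [x [xU xV x1 xg]] := constr_exists i g hrN nlt.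
  have [[uU vV] u1 v1 orth mx] := PP k.
  have := mx x x xU xV x1 x1.
  have H : forall j : 'I_(N - r), (j < k)%N -> dotv (u j) x = 0 /\ dotv (v j) x = 0.
    move=> j jk; rewrite -IH; last by rewrite -kn.
      by rewrite -gE xg // -kn.
    lia.
  move=> /(_ H) h1.
  apply: cs_eq1 => //; apply/le_anti; rewrite leq1 //= x1 in h1 *; exact: h1.
have uv : forall k : 'I_(N - r), (k < N - r - 1)%N -> u k = v k.
  move=> k hk; apply: (step1 (N - r).-1) => //; by rewrite -subn1.
split.
  by move=> k hk; rewrite -uv //; have [_ u1 _ _ _] := PP k.
move=> k hk.
have [[uU vV] u1 v1 orth mx] := PP k.
have UV : forall j : 'I_(N - r), (j < N - r - 1)%N ->
    in_null (selB R i) (u j) /\ in_null (onesA R N) (u j).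
  move=> j hj; have [[uU' vV'] _ _ _ _] := PP j.
  by split => //; rewrite uv.
have hg : forall j, (j < (N - r).-1)%N ->
    in_null (selB R i) (g j) /\ in_null (onesA R N) (g j).
  move=> j hj; have jp : (j < N - r)%N by lia.
  have gj : g j = u (Ordinal jp) := gE (Ordinal jp).
  rewrite gj; apply: UV => /=; lia.
have hgo : forall j l, (j < (N - r).-1)%N -> (l < (N - r).-1)%N ->
    dotv (g j) (g l) = (j == l)%:R.
  move=> j l hj hl; have jp : (j < N - r)%N by lia.
  have lp : (l < N - r)%N by lia.
  have gj : g j = u (Ordinal jp) := gE (Ordinal jp).
  have gl : g l = u (Ordinal lp) := gE (Ordinal lp).
  rewrite gj gl; case: (ltngtP j l) => [jl|lj|jl].
  - have [_ _ _ o _] := PP (Ordinal lp).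
    by rewrite (proj1 (o (Ordinal jp) jl)).
  - have [_ _ _ o _] := PP (Ordinal jp).
    by rewrite dotvC (proj1 (o (Ordinal lp) lj)).
  - have -> : Ordinal jp = Ordinal lp by apply: val_inj.
    rewrite ?eqxx; have [_ u1' _ _ _] := PP (Ordinal lp); rewrite u1' //.
have hxg : forall j, (j < (N - r).-1)%N -> dotv (g j) (u k) = 0.
  move=> j hj; have jp : (j < N - r)%N by lia.
  have gj : g j = u (Ordinal jp) := gE (Ordinal jp).
  by rewrite gj; apply: (proj1 (orth (Ordinal jp) _)) => /=; lia.
have [xe a1] := zlemma hi hrN hg hgo uU u1 hxg.
set a := dotv (wv R i) (u k) / (N - r)%:R in xe a1.
apply/le_anti/andP; split.
  by rewrite xe; apply: upper.
have [s [s1 hs]] := lower (R:=R) hi hr1 hrN a1.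
have [Y1 Y2 Y3 Y4] := y0_facts R hi hr1 hrN.
rewrite -hs -xe; apply: mx => //.
- by rewrite /in_null -scalemxAr Y2 scaler0.
- by rewrite dotvZl dotvZr Y1 mulr1 -expr2.
move=> j jk; split; first exact: (proj1 (orth j jk)).
have [jU jV] : in_null (selB R i) (u j) /\ in_null (onesA R N) (u j) by apply: UV; lia.
by rewrite -uv; [rewrite dotvZr Y4 ?mulr0 | lia].
Qed.

Lemma exist_part (R : realType) (N r : nat) (hN : (2 <= N)%N)
    (hr1 : (1 <= r)%N) (hrN : (r < N)%N) (i : 'I_r -> 'I_N) (hi : injective i) :
  exists u v : 'I_(N - r) -> 'cV[R]_N, principal_pairs (selB R i) (onesA R N) u v.
Proof.
have fam : forall n, (n <= (N - r).-1)%N -> exists f : nat -> 'cV[R]_N,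
    (forall j, (j < n)%N -> in_null (selB R i) (f j) /\ in_null (onesA R N) (f j)) /\
    (forall j l, (j < n)%N -> (l < n)%N -> dotv (f j) (f l) = (j == l)%:R).
  elim=> [|n IH] hn; first by exists (fun _ => 0).
  have [f [fUV fo]] := IH (ltnW hn).
  have [x [xU xV x1 xf]] := constr_exists i f hrN hn.
  exists (fun j => if j == n then x else f j); split.
    move=> j; rewrite ltnS leq_eqVlt => /orP [/eqP ->|jn]; first by rewrite eqxx.
    by rewrite ltn_eqF //; apply: fUV.
  move=> j l; rewrite ltnS leq_eqVlt => /orP [/eqP ->|jn];
    rewrite ltnS leq_eqVlt => /orP [/eqP ->|ln].
  - by rewrite !eqxx x1.
  - by rewrite eqxx (ltn_eqF ln) dotvC xf // gtn_eqF.
  - by rewrite eqxx (ltn_eqF jn) xf // ltn_eqF.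
  - by rewrite (ltn_eqF ln) (ltn_eqF jn) fo.
have [f [fUV fo]] := fam (N - r).-1 (leqnn _).
have [Y1 Y2 Y3 Y4] := y0_facts R hi hr1 hrN.
have [EN r0 p0 N0 c2] := numfacts R hr1 hrN.
set w' := (Num.sqrt ((N - r)%:R : R))^-1 *: wv R i.
have sp : Num.sqrt ((N - r)%:R : R) != 0 by rewrite sqrtr_eq0 -ltNge ltr0n subn_gt0.
have a1 : (Num.sqrt ((N - r)%:R : R))^-1 ^+ 2 * (N - r)%:R = 1.
  by rewrite exprVn sqr_sqrtr ?ler0n // mulVf.
have w'U : in_null (selB R i) w' by rewrite /in_null -scalemxAr wU scaler0.
have w'w' : dotv w' w' = 1.
  by rewrite /w' dotvZl dotvZr ww // mulrA -expr2.
have fw' : forall j, (j < (N - r).-1)%N -> dotv (f j) w' = 0.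
  move=> j hj; have [jU jV] := fUV j hj.
  by rewrite /w' dotvZr dotvC w_dotU // (proj1 (inV_iff _) jV) mulr0.
exists (fun k => if (k < (N - r).-1)%N then f k else w').
exists (fun k => if (k < (N - r).-1)%N then f k else y0v R i).
move=> k; case: ifP => kp.
  have [kU kV] := fUV k kp.
  have kk : dotv (f k) (f k) = 1 by rewrite fo // eqxx.
  split.
  - by split.
  - exact: kk.
  - exact: kk.
  - move=> j jk; have jp := ltn_trans jk kp; rewrite jp fo // ltn_eqF //.
  move=> x y xU yV x1 y1 _; rewrite kk; exact: leq1.
have kE : k = (N - r).-1 :> nat by have := ltn_ord k; move: kp => /negbT; lia.
split.
- split => //; by rewrite /in_null -scalemxAr Y2 scaler0.
- exact: w'w'.
- exact: Y1.
- move=> j jk; have hj : (j < (N - r).-1)%N by rewrite -kE.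
  rewrite hj; have [jU jV] := fUV j hj; split; [exact: fw' | exact: Y4].
move=> x y xU yV x1 y1 xo.
have xg : forall j, (j < (N - r).-1)%N -> dotv (f j) x = 0.
  move=> j hj; have jp : (j < N - r)%N by lia.
  have := proj1 (xo (Ordinal jp) _); rewrite /= hj; apply; by rewrite kE.
have [xe xa1] := zlemma hi hrN fUV fo xU x1 xg.
rewrite xe; apply: (le_trans (upper hi hr1 hrN xa1 yV y1)).
rewrite -(abs_ac hr1 hrN a1) /w' dotvZl Y3 ger0_norm // mulr_ge0 ?invr_ge0 ?sqrtr_ge0 //.
Qed.


Theorem lemma2p4 (R : realType) (N r : nat) (hN : (2 <= N)%N)
    (hr1 : (1 <= r)%N) (hrN : (r < N)%N) (i : 'I_r -> 'I_N) (hi : injective i) :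
  (exists u v : 'I_(N - r) -> 'cV[R]_N,
      principal_pairs (selB R i) (onesA R N) u v) /\
  (forall u v : 'I_(N - r) -> 'cV[R]_N,
      principal_pairs (selB R i) (onesA R N) u v ->
      (forall k : 'I_(N - r), (k < N - r - 1)%N -> dotv (u k) (v k) = 1) /\
      (forall k : 'I_(N - r), (k : nat) = (N - r - 1)%N ->
          dotv (u k) (v k) = Num.sqrt (r%:R / N%:R))).
Proof.
split; first exact: exist_part.
by move=> u v; apply: uniq_part.
Qed.
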